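(* For any nonempty starting set $S_0\subseteq V$, any integer $T\geq 0$, and any stopping time $\tau$ (with respect to the natural filtration) for the volume-biased evolving set process $(S_t)$ started from $S_0$ with $\tau\leq T$ almost surely, \[ \widehat{\mathbf E}_{S_0}\Big[\frac{\mathrm{cost}(S_0,\dots,S_\tau)}{\mu(S_\tau)}\Big] \leq 1+4\sqrt{T\log\mu(V)}, \] where $\mathrm{cost}(S_0,\dots,S_t)=\mu(S_0)+\sum_{j=1}^{t}\big(\mu(S_j\,\Delta\, S_{j-1})+\partial(S_{j-1})\big)$ and $\Delta$ denotes symmetric difference.
   Context: Let $G=(V,E)$ be a finite simple undirected graph in which every vertex has positive degree $d(x)$. For $S\subseteq V$, $\mu(S)=\sum_{x\in S}d(x)$, $\partial(S)$ is the number of edges with exactly one endpoint in $S$, and $\phi(S)=\partial(S)/\mu(S)$. $\log$ is the natural logarithm. The lazy random walk has transition kernel $p(x,y)=1/(2d(x))$ if $\{x,y\}\in E$, $p(x,x)=1/2$, and $0$ otherwise; $p(x,S)=\sum_{y\in S}p(x,y)$. The evolving set process (ESP): from state $S$, pick $U$ uniform on $[0,1]$ and move to $\{y: p(y,S)\geq U\}$; $K(S,S')$ denotes its transition kernel. The volume-biased ESP is the Markov chain on nonempty subsets with kernel $\widehat K(S,S')=\frac{\mu(S')}{\mu(S)}K(S,S')$; $\widehat{\mathbf E}_{S_0}$ denotes expectation for it started at $S_0$. *)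

(* Defs.v *)
From mathcomp Require Import all_boot.
From Stdlib Require Import Reals.

Set Implicit Arguments.
Unset Strict Implicit.
Unset Printing Implicit Defensive.

Definition rsum (A : Type) (s : seq A) (f : A -> R) : R :=
  foldr (fun a acc => Rplus (f a) acc) 0%R s.

Section ESP.
Variable V : finType.
(* simple undirected graph: e symmetric and irreflexive (hypotheses of the theorem) *)
Variable e : rel V.

Definition deg (x : V) : nat := #|[set y | e x y]|.

Definition vol (S : {set V}) : R := INR (\sum_(x in S) deg x).

(* boundary: number of edges with exactly one endpoint in S; each such edge
   {x,y} is counted once as the ordered pair (x,y) with x in S, y not in S *)
Definition bdry (S : {set V}) : R :=
  INR #|[set pr : V * V | [&& pr.1 \in S, pr.2 \notin S & e pr.1 pr.2]]|.

Definition symdiff (A B : {set V}) : {set V} := (A :\: B) :|: (B :\: A).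

Definition lazyP (x y : V) : R :=
  if x == y then (/ 2)%R
  else if e x y then (/ (2 * INR (deg x)))%R else 0%R.

Definition lazyPS (x : V) (S : {set V}) : R := rsum (enum S) (fun y => lazyP x y).

(* Evolving set kernel K(S,S') = Leb{ U in [0,1] : {y : p(y,S) >= U} = S' }.
   {y : p(y,S) >= U} = S'  iff  U <= min_{y in S'} p(y,S)  and
   U > max_{y notin S'} p(y,S); so K(S,S') is the length of that interval
   intersected with [0,1] (empty min = 1, empty max = 0; p(y,S) in [0,1]). *)
Definition esp_hi (S S' : {set V}) : R :=
  foldr Rmin 1%R [seq lazyPS y S | y <- enum S'].
Definition esp_lo (S S' : {set V}) : R :=
  foldr Rmax 0%R [seq lazyPS y S | y <- enum (~: S')].
Definition espK (S S' : {set V}) : R := Rmax 0 (esp_hi S S' - esp_lo S S').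

Definition espKhat (S S' : {set V}) : R := (vol S' / vol S * espK S S')%R.

(* A trajectory of length T from S0 is encoded by w = (S_1,...,S_T). *)
Definition state (S0 : {set V}) (w : seq {set V}) (j : nat) : {set V} :=
  nth S0 (S0 :: w) j.

Definition path_weight (T : nat) (S0 : {set V}) (w : seq {set V}) : R :=
  foldr Rmult 1%R [seq espKhat (state S0 w j) (state S0 w j.+1) | j <- iota 0 T].

Definition expect (T : nat) (S0 : {set V}) (f : T.-tuple {set V} -> R) : R :=
  rsum (enum {: T.-tuple {set V}}) (fun w => (path_weight T S0 w * f w)%R).

Definition cost (S0 : {set V}) (w : seq {set V}) (t : nat) : R :=
  (vol S0 + rsum (iota 1 t)
     (fun j => vol (symdiff (state S0 w j) (state S0 w j.-1))
               + bdry (state S0 w j.-1)))%R.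

End ESP.

Definition is_stopping_time (V : finType) (T : nat) (S0 : {set V})
    (tau : T.-tuple {set V} -> nat) : Prop :=
  forall (w w' : T.-tuple {set V}) (t : nat),
    (forall j, (j <= t)%N -> state S0 w j = state S0 w' j) ->
    (tau w = t <-> tau w' = t).

(* Main.v *)
Require Import Defs.
From HB Require Import structures.
From mathcomp Require Import all_boot.
From Stdlib Require Import Reals Lra Psatz.

Local Open Scope R_scope.
Lemma ln0 : ln 0 = 0.
Proof. unfold ln; destruct (Rlt_dec 0 0) as [r|r]; [exfalso; exact (Rlt_irrefl _ r)|reflexivity]. Qed.

Lemma ln_le_sub1 y : 0 < y -> ln y <= y - 1.
Proof. move=> hy; have := exp_ineq1_le (ln y); rewrite exp_ln //; lra. Qed.

Lemma ln_ge_1m s : 0 < s -> 1 - / s <= ln s.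
Proof.
move=> hs; have h := @ln_le_sub1 (/ s) (Rinv_0_lt_compat _ hs).
rewrite ln_Rinv // in h; lra.
Qed.

Lemma key_ineq x l : 0 <= x -> 0 < l ->
  2 * Rabs (x - 1) <= l * (x * ln x - x + 1) + 2 * (1 + x) / l.
Proof.
move=> hx hl.
case: (Req_dec x 0) => [->|x0].
  rewrite ln0 Rmult_0_r Rminus_0_r Rminus_0_l Rabs_Ropp Rabs_R1.
  apply: (Rmult_le_reg_r l) => //.
  have -> : (l * (0 + 1) + 2 * (1 + 0) / l) * l = l * l + 2 by field; lra.
  have := Rle_0_sqr (l - 1); rewrite /Rsqr => h. lra.
have xp : 0 < x by lra.
set s := sqrt x.
have sp : 0 < s by apply: sqrt_lt_R0.
have ss : s * s = x by apply: sqrt_sqrt; lra.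
clearbody s.
have lx : ln x = 2 * ln s by rewrite -ss ln_mult //; ring.
have hl1 := ln_ge_1m s sp.
have h1 : x * ln x - x + 1 >= (s - 1) * (s - 1).
  rewrite lx -ss.
  have : s * s * (2 * (1 - / s)) <= s * s * (2 * ln s).
    apply: Rmult_le_compat_l; last lra.
    have := Rle_0_sqr s; rewrite /Rsqr; lra.
  have -> : s * s * (2 * (1 - / s)) = 2 * s * s - 2 * s by field; lra.
  lra.
have habs : Rabs (x - 1) = Rabs (s - 1) * (s + 1).
  rewrite -ss -(Rabs_pos_eq (s + 1)); last lra.
  rewrite -Rabs_mult; congr Rabs; ring.
rewrite habs.
set u := Rabs (s - 1).
have uu : u * u = (s - 1) * (s - 1).
  rewrite /u -Rabs_mult; apply: Rabs_pos_eq; have := Rle_0_sqr (s - 1); rewrite /Rsqr; lra.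
clearbody u.
apply: (Rmult_le_reg_r l) => //.
have -> : (l * (x * ln x - x + 1) + 2 * (1 + x) / l) * l =
          l * l * (x * ln x - x + 1) + 2 * (1 + x) by field; lra.
have H1 : l * l * (x * ln x - x + 1) >= l * l * (u * u).
  apply: Rmult_ge_compat_l; first (have := Rle_0_sqr l; rewrite /Rsqr; lra).
  lra.
have H2 := Rle_0_sqr (l * u - (s + 1)); rewrite /Rsqr in H2.
have H3 := Rle_0_sqr (s - 1); rewrite /Rsqr in H3.
rewrite -ss.
rewrite -ss in H1.
lra.
Qed.

Lemma ln_le_mono x y : 0 < x -> x <= y -> ln x <= ln y.
Proof.
move=> hx hxy; case: (Rle_lt_or_eq_dec _ _ hxy) => [h|->]; last lra.
apply: Rlt_le; exact: ln_increasing.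
Qed.

Set Implicit Arguments.
Unset Strict Implicit.
Unset Printing Implicit Defensive.

HB.instance Definition _ := Monoid.isComLaw.Build R 0%R Rplus (fun a b c => esym (Rplus_assoc a b c)) Rplus_comm Rplus_0_l.


Lemma rsumE (A : Type) (s : seq A) (f : A -> R) :
  rsum s f = \big[Rplus/0]_(x <- s) f x.
Proof. elim: s => [|a s IH] /=; first by rewrite big_nil. by rewrite big_cons IH. Qed.

Lemma rsum_mull (I : Type) (r : seq I) (P : pred I) (F : I -> R) c :
  c * \big[Rplus/0]_(i <- r | P i) F i = \big[Rplus/0]_(i <- r | P i) (c * F i).
Proof.
apply: (big_endo (fun x => c * x)) => [x y|]; [exact: Rmult_plus_distr_l|exact: Rmult_0_r].
Qed.

Lemma rsum_mulr (I : Type) (r : seq I) (P : pred I) (F : I -> R) c :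
  \big[Rplus/0]_(i <- r | P i) F i * c = \big[Rplus/0]_(i <- r | P i) (F i * c).
Proof.
rewrite Rmult_comm rsum_mull; apply: eq_bigr => i _; exact: Rmult_comm.
Qed.

Lemma rsum_le (I : Type) (r : seq I) (P : pred I) (F G : I -> R) :
  (forall i, P i -> F i <= G i) ->
  \big[Rplus/0]_(i <- r | P i) F i <= \big[Rplus/0]_(i <- r | P i) G i.
Proof.
move=> H; apply: (big_ind2 (fun x y => x <= y)) => //; first lra.
by move=> *; lra.
Qed.

Lemma rsum_ge0 (I : Type) (r : seq I) (P : pred I) (F : I -> R) :
  (forall i, P i -> 0 <= F i) -> 0 <= \big[Rplus/0]_(i <- r | P i) F i.
Proof.
move=> H; apply: (big_ind (fun x => 0 <= x)) => //; [lra|by move=> *; lra].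
Qed.

Lemma rsum_add (I : Type) (r : seq I) (P : pred I) (F G : I -> R) :
  \big[Rplus/0]_(i <- r | P i) (F i + G i) =
  \big[Rplus/0]_(i <- r | P i) F i + \big[Rplus/0]_(i <- r | P i) G i.
Proof. exact: big_split. Qed.

Lemma rsum_opp (I : Type) (r : seq I) (P : pred I) (F : I -> R) :
  \big[Rplus/0]_(i <- r | P i) (- F i) = - \big[Rplus/0]_(i <- r | P i) F i.
Proof.
apply: esym; apply: (big_morph (fun x => - x)) => [x y|]; lra.
Qed.

Lemma INR_sum (I : Type) (r : seq I) (P : pred I) (F : I -> nat) :
  INR (\sum_(i <- r | P i) F i)%N = \big[Rplus/0]_(i <- r | P i) INR (F i).
Proof.
apply: (big_morph INR) => [x y|]; [exact: plus_INR|by []].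
Qed.

Lemma rsum_const_set (I : finType) (c : R) :
  (forall i : I, True) -> True.
Proof. by []. Qed.

Lemma rsum_mullT (I : Type) (r : seq I) (F : I -> R) c :
  c * \big[Rplus/0]_(i <- r) F i = \big[Rplus/0]_(i <- r) (c * F i).
Proof. exact: rsum_mull. Qed.

Lemma rsum_mulrT (I : Type) (r : seq I) (F : I -> R) c :
  \big[Rplus/0]_(i <- r) F i * c = \big[Rplus/0]_(i <- r) (F i * c).
Proof. exact: rsum_mulr. Qed.

Lemma exchange_bigT (I J : finType) (F : I -> J -> R) :
  \big[Rplus/0]_(i : I) \big[Rplus/0]_(j : J) F i j =
  \big[Rplus/0]_(j : J) \big[Rplus/0]_(i : I) F i j.
Proof. exact: exchange_big. Qed.

Lemma rsum_comb (I : finType) (F G H : I -> R) a b c :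
  \big[Rplus/0]_(i : I) (a * F i + b * G i + c * H i) =
  a * \big[Rplus/0]_(i : I) F i + b * \big[Rplus/0]_(i : I) G i + c * \big[Rplus/0]_(i : I) H i.
Proof. by rewrite !big_split /= !rsum_mullT. Qed.

Lemma rsum_comb4 (I : finType) (F G H J : I -> R) a b c d :
  \big[Rplus/0]_(i : I) (a * F i + b * G i + c * H i + d * J i) =
  a * \big[Rplus/0]_(i : I) F i + b * \big[Rplus/0]_(i : I) G i +
  c * \big[Rplus/0]_(i : I) H i + d * \big[Rplus/0]_(i : I) J i.
Proof. by rewrite !big_split /= !rsum_mullT. Qed.

Section Fold.
Variable Ty : eqType.
Variable p : Ty -> R.

Lemma fmin_le s y : y \in s -> foldr Rmin 1 [seq p x | x <- s] <= p y.
Proof.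
elim: s => [|a s IH] //=; rewrite inE; case/orP => [/eqP->|/IH H].
  exact: Rmin_l.
by apply: Rle_trans H; apply: Rmin_r.
Qed.

Lemma fmin_le1 s : foldr Rmin 1 [seq p x | x <- s] <= 1.
Proof.
elim: s => [|a s IH] /=; first lra.
by apply: Rle_trans IH; apply: Rmin_r.
Qed.

Lemma fmin_ge s c : c <= 1 -> (forall y, y \in s -> c <= p y) ->
  c <= foldr Rmin 1 [seq p x | x <- s].
Proof.
move=> c1; elim: s => [|a s IH] //= H.
apply: Rmin_glb; first by apply: H; rewrite inE eqxx.
by apply: IH => y ys; apply: H; rewrite inE ys orbT.
Qed.

Lemma fmax_ge s y : y \in s -> p y <= foldr Rmax 0 [seq p x | x <- s].
Proof.
elim: s => [|a s IH] //=; rewrite inE; case/orP => [/eqP->|/IH H].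
  exact: Rmax_l.
by apply: Rle_trans H _; apply: Rmax_r.
Qed.

Lemma fmax_ge0 s : 0 <= foldr Rmax 0 [seq p x | x <- s].
Proof.
elim: s => [|a s IH] /=; first lra.
by apply: Rle_trans IH _; apply: Rmax_r.
Qed.

Lemma fmax_le s c : 0 <= c -> (forall y, y \in s -> p y <= c) ->
  foldr Rmax 0 [seq p x | x <- s] <= c.
Proof.
move=> c0; elim: s => [|a s IH] //= H.
apply: Rmax_lub; first by apply: H; rewrite inE eqxx.
by apply: IH => y ys; apply: H; rewrite inE ys orbT.
Qed.

Lemma exists_min (s : seq Ty) : s <> [::] ->
  exists2 y, y \in s & forall z, z \in s -> p y <= p z.
Proof.
elim: s => [|a s IH] // _.
case: s IH => [|b s] IH.
  by exists a; rewrite ?inE // => z; rewrite inE => /eqP->; lra.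
case: IH => // y ys Hy.
case: (Rle_lt_dec (p a) (p y)) => Hay.
  exists a; first by rewrite inE eqxx.
  move=> z; rewrite inE => /orP [/eqP->|/Hy]; lra.
exists y; first by rewrite inE ys orbT.
move=> z; rewrite inE => /orP [/eqP->|/Hy]; lra.
Qed.
End Fold.

Section LayerCake.
Variable Ty : finType.
Variable p : Ty -> R.
Hypothesis p0 : forall y, 0 <= p y.
Hypothesis p1 : forall y, p y <= 1.

Definition hiS (A : {set Ty}) := foldr Rmin 1 [seq p y | y <- enum A].
Definition loS (U A : {set Ty}) := foldr Rmax 0 [seq p y | y <- enum (U :\: A)].
Definition KU (U A : {set Ty}) := Rmax 0 (hiS A - loS U A).

Lemma KU_ge0 (U A : {set Ty}) : 0 <= KU U A.
Proof. exact: Rmax_l. Qed.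

Lemma hiS_le (A : {set Ty}) y : y \in A -> hiS A <= p y.
Proof. by move=> yA; apply: fmin_le; rewrite mem_enum. Qed.

Lemma hiS_ge (A : {set Ty}) c : c <= 1 -> (forall y, y \in A -> c <= p y) -> c <= hiS A.
Proof. by move=> c1 H; apply: fmin_ge => // y; rewrite mem_enum; apply: H. Qed.

Lemma loS_ge (U A : {set Ty}) y : y \in U :\: A -> p y <= loS U A.
Proof. by move=> yA; apply: fmax_ge; rewrite mem_enum. Qed.

Lemma loS_le (U A : {set Ty}) c : 0 <= c -> (forall y, y \in U :\: A -> p y <= c) -> loS U A <= c.
Proof. by move=> c1 H; apply: fmax_le => // y; rewrite mem_enum; apply: H. Qed.

Lemma loS0 (U A : {set Ty}) : 0 <= loS U A.
Proof. exact: fmax_ge0. Qed.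

Lemma hiS1 (A : {set Ty}) : hiS A <= 1.
Proof. exact: fmin_le1. Qed.

Lemma KU_rec (U : {set Ty}) y0 (f : {set Ty} -> R) :
  y0 \in U -> (forall z, z \in U -> p y0 <= p z) ->
  \big[Rplus/0]_(A : {set Ty} | A \subset U) (KU U A * f A) =
  \big[Rplus/0]_(A : {set Ty} | A \subset U :\ y0) (KU (U :\ y0) A * f A)
   + p y0 * (f U - f (U :\ y0)).
Proof.
move=> y0U ymin.
set U' := U :\ y0.
rewrite (bigID (fun A : {set Ty} => y0 \in A)) /=.
have -> : \big[Rplus/0]_(A : {set Ty} | (A \subset U) && (y0 \in A)) (KU U A * f A) = p y0 * f U.
  rewrite (bigD1 U) /=; last by rewrite subxx y0U.
  rewrite big1 ?Rplus_0_r.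
    congr (_ * _); rewrite /KU.
    have hU : hiS U = p y0.
      apply: Rle_antisym; first exact: hiS_le.
      by apply: hiS_ge => //; apply: p1.
    have lU : loS U U = 0.
      by apply: Rle_antisym; [apply: loS_le => [|y]; [lra|rewrite setDv inE]|apply: loS0].
    rewrite hU lU Rminus_0_r; apply: Rmax_right; exact: p0.
  move=> A /andP [/andP [AU y0A] AneU].
  have [z zUA] : exists z, z \in U :\: A.
    apply/set0Pn; rewrite setD_eq0; apply: contra AneU => UA.
    by rewrite eqEsubset AU UA.
  have h1 : hiS A <= p y0 by apply: hiS_le.
  have h2 : p z <= loS U A by apply: loS_ge.
  have h3 : p y0 <= p z by apply: ymin; move: zUA; rewrite inE => /andP [].
  rewrite /KU Rmax_left ?Rmult_0_l //; lra.
have -> : \big[Rplus/0]_(A : {set Ty} | (A \subset U) && (y0 \notin A)) (KU U A * f A) =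
          \big[Rplus/0]_(A : {set Ty} | A \subset U') (KU U A * f A).
  by apply: eq_bigl => A; rewrite subsetD1.
rewrite (bigD1 U') //= [in RHS](bigD1 U') //=.
have lo' : loS U' U' = 0.
  by apply: Rle_antisym; [apply: loS_le => [|y]; [lra|rewrite setDv inE]|apply: loS0].
have lo1 : loS U U' = p y0.
  apply: Rle_antisym.
    apply: loS_le => [|y]; first exact: p0.
    rewrite /U' !inE => /andP [H yU]; rewrite yU andbT negbK in H.
    by rewrite (eqP H); lra.
  by apply: loS_ge; rewrite /U' !inE eqxx y0U.
have hi' : p y0 <= hiS U'.
  apply: hiS_ge; first exact: p1.
  by move=> y; rewrite /U' inE => /andP [_ /ymin].
have KU1 : KU U U' = KU U' U' - p y0.
  rewrite /KU lo1 lo' Rminus_0_r Rmax_right ?Rmax_right; try lra.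
  by apply: Rle_trans hi'; apply: p0.
have -> : \big[Rplus/0]_(i : {set Ty} | (i \subset U') && (i != U')) (KU U i * f i) =
          \big[Rplus/0]_(i : {set Ty} | (i \subset U') && (i != U')) (KU U' i * f i).
  apply: eq_bigr => A /andP [AU' AneU']; congr (_ * _); rewrite /KU.
  have [z zUA] : exists z, z \in U' :\: A.
    apply/set0Pn; rewrite setD_eq0; apply: contra AneU' => UA.
    by rewrite eqEsubset AU' UA.
  have -> : loS U A = loS U' A; last by [].
  apply: Rle_antisym.
    apply: loS_le; first exact: loS0.
    move=> y; rewrite !inE => /andP [yA yU].
    case: (eqVneq y y0) => [->|ny0].
      apply: Rle_trans (ymin z _) (loS_ge zUA).
      by move: zUA; rewrite !inE => /and3P [].
    by apply: loS_ge; rewrite !inE ny0 yA yU.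
  apply: loS_le; first exact: loS0.
  move=> y; rewrite !inE => /and3P [yA yn yU].
  by apply: loS_ge; rewrite !inE yA yU.
rewrite KU1; set s := \big[Rplus/0]_(i | _) _; rewrite /s; clearbody s. move: (KU U' U') (f U) (f U') (p y0) => a b c d. ring.
Qed.


Lemma KU_base (f : {set Ty} -> R) :
  \big[Rplus/0]_(A : {set Ty} | A \subset set0) (KU set0 A * f A) = f set0.
Proof.
rewrite (eq_bigl (fun A => A == set0)); last by move=> A; rewrite subset0.
rewrite big_pred1_eq /KU /hiS /loS setD0 enum_set0 /= Rminus_0_r Rmax_right; lra.
Qed.

Lemma KU_ind (P : {set Ty} -> Prop) :
  P set0 -> (forall (U : {set Ty}) y0, y0 \in U -> (forall z, z \in U -> p y0 <= p z) ->
                 P (U :\ y0) -> P U) -> forall U, P U.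
Proof.
move=> P0 Pstep.
suff H : forall n (U : {set Ty}), #|U| = n -> P U by move=> U; exact: (H _ U erefl).
elim=> [|n IH] U cU.
  by move/eqP: cU; rewrite cards_eq0 => /eqP->.
have : enum U <> [::].
  move=> E; move: cU; rewrite cardE E //.
case/(exists_min p) => y0; rewrite mem_enum => y0U ymin.
apply: (Pstep U y0 y0U) => [z zU|]; first by apply: ymin; rewrite mem_enum.
apply: IH; move: cU; rewrite (cardsD1 y0) y0U => /eqP; rewrite eqSS => /eqP.
by [].
Qed.


Lemma KU_sum1 (U : {set Ty}) : \big[Rplus/0]_(A : {set Ty} | A \subset U) (KU U A * 1) = 1.
Proof.
elim/KU_ind: U => [|U y0 y0U ymin IH]; first by rewrite KU_base.
rewrite (KU_rec _ y0U ymin) IH. lra.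
Qed.

Lemma KU_summem (U : {set Ty}) y : y \in U ->
  \big[Rplus/0]_(A : {set Ty} | A \subset U) (KU U A * (if y \in A then 1 else 0)) = p y.
Proof.
elim/KU_ind: U => [|U y0 y0U ymin IH]; first by rewrite inE.
move=> yU; rewrite (KU_rec _ y0U ymin) yU.
case: (eqVneq y y0) => [->|ny0].
  rewrite big1 ?inE ?eqxx /=; first ring.
  move=> A; move/subsetP=> AU; case: ifP; last by rewrite Rmult_0_r.
  by move/AU; rewrite !inE eqxx.
rewrite IH ?inE ?ny0 ?yU //=; ring.
Qed.

End LayerCake.

Lemma iter_Rplus n c : iter n (Rplus c) 0 = INR n * c.
Proof. elim: n => [|n IH]; first (simpl; ring). rewrite iterS IH S_INR; ring. Qed.

Lemma sum_if_const (Tp : finType) (P : pred Tp) c :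
  \big[Rplus/0]_(y : Tp) (if P y then c else 0) = INR #|[set y | P y]| * c.
Proof.
rewrite -big_mkcond (eq_bigl (fun y => y \in [set y | P y])); last by move=> y; rewrite inE.
by rewrite big_const iter_Rplus.
Qed.

Lemma sum_ind_card (Tp : finType) (A : {set Tp}) :
  \big[Rplus/0]_(y : Tp) (if y \in A then 1 else 0) = INR #|A|.
Proof.
rewrite sum_if_const Rmult_1_r; congr INR; apply: eq_card => y; by rewrite inE.
Qed.

Section Graph.
Variable V : finType.
Variable e : rel V.
Hypothesis e_sym : symmetric e.
Hypothesis e_irr : irreflexive e.
Hypothesis deg_pos : forall x : V, leq 1 (deg e x).

Definition ind (A : {set V}) (y : V) : R := if y \in A then 1 else 0.
Definition dg (x : V) : R := INR (deg e x).

Lemma dg_pos (x : V) : 0 < dg x.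
Proof. apply: lt_0_INR; apply/leP; exact: deg_pos. Qed.

Lemma volE (A : {set V}) : vol e A = \big[Rplus/0]_(y : V) (dg y * ind A y).
Proof.
rewrite /vol INR_sum big_mkcond; apply: eq_bigr => y _; rewrite /ind /dg.
by case: (y \in A); ring.
Qed.

Lemma vol_ge0 (A : {set V}) : 0 <= vol e A.
Proof. exact: pos_INR. Qed.

Lemma vol_pos (A : {set V}) : A != set0 -> 0 < vol e A.
Proof.
case/set0Pn => x xA; rewrite volE (bigD1 x) //=.
have h1 : 0 <= \big[Rplus/0]_(y | y != x) (dg y * ind A y).
  apply: rsum_ge0 => y _; rewrite /ind; case: (y \in A); have := dg_pos y; lra.
have := dg_pos x; rewrite {1}/ind xA; lra.
Qed.

Lemma vol_le_setT A : vol e A <= vol e [set: V].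
Proof.
rewrite !volE; apply: rsum_le => y _; rewrite /ind inE.
have := dg_pos y; case: (y \in A); lra.
Qed.

Lemma lazyP_ge0 (x y : V) : 0 <= lazyP e x y.
Proof.
rewrite /lazyP; case: (x == y); first lra.
case: (e x y); last lra.
have := dg_pos x; rewrite /dg => h; apply: Rlt_le; apply: Rinv_0_lt_compat; lra.
Qed.

Lemma lazyP_split (x y : V) : lazyP e x y =
  (if x == y then / 2 else 0) + (if e x y then / (2 * dg x) else 0).
Proof.
rewrite /lazyP /dg; case: eqP => [->|_]; first by rewrite e_irr; ring.
ring.
Qed.

Lemma sum_eq1 (x : V) (c : R) : \big[Rplus/0]_(y : V) (if x == y then c else 0) = c.
Proof.
rewrite (bigD1 x) //= eqxx big1 ?Rplus_0_r // => y yx.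
by rewrite eq_sym (negbTE yx).
Qed.

Lemma lazyP_sum (x : V) : \big[Rplus/0]_(y : V) lazyP e x y = 1.
Proof.
under eq_bigr do rewrite lazyP_split.
rewrite big_split /= sum_eq1 sum_if_const.
have := dg_pos x; rewrite /dg /deg => h; field; lra.
Qed.

Definition pS (S : {set V}) (y : V) := lazyPS e y S.

Lemma pSE (S : {set V}) (y : V) : pS S y = \big[Rplus/0]_(z in S) lazyP e y z.
Proof. by rewrite /pS /lazyPS rsumE big_enum. Qed.

Lemma pS_ge0 (S : {set V}) (y : V) : 0 <= pS S y.
Proof. rewrite pSE; apply: rsum_ge0 => z _; exact: lazyP_ge0. Qed.

Lemma pS_le1 (S : {set V}) (y : V) : pS S y <= 1.
Proof.
rewrite pSE -(lazyP_sum y) [in X in _ <= X](bigID (fun z => z \in S)) /=.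
have : 0 <= \big[Rplus/0]_(i | i \notin S) lazyP e y i.
  apply: rsum_ge0 => z _; exact: lazyP_ge0.
lra.
Qed.

Lemma pS_in (S : {set V}) (y : V) : y \in S -> / 2 <= pS S y.
Proof.
move=> yS; rewrite pSE (bigD1 y) //= {1}/lazyP eqxx.
have : 0 <= \big[Rplus/0]_(i | (i \in S) && (i != y)) lazyP e y i.
  apply: rsum_ge0 => z _; exact: lazyP_ge0.
lra.
Qed.

Lemma pS_out (S : {set V}) (y : V) : y \notin S -> pS S y <= / 2.
Proof.
move=> yS.
have h := lazyP_sum y.
rewrite (bigD1 y) //= {1}/lazyP eqxx in h.
rewrite pSE.
have : \big[Rplus/0]_(z in S) lazyP e y z <= \big[Rplus/0]_(z | z != y) lazyP e y z.
  rewrite [in X in _ <= X](bigID (fun z => z \in S)) /=.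
  have -> : \big[Rplus/0]_(i | (i != y) && (i \in S)) lazyP e y i =
            \big[Rplus/0]_(i in S) lazyP e y i.
    apply: eq_bigl => z; case: (eqVneq z y) => [->|//]; by rewrite (negbTE yS).
  have : 0 <= \big[Rplus/0]_(i | (i != y) && (i \notin S)) lazyP e y i.
    apply: rsum_ge0 => z _; exact: lazyP_ge0.
  lra.
lra.
Qed.

Lemma espK_KU (S A : {set V}) : espK e S A = KU (pS S) setT A.
Proof. by rewrite /espK /KU /esp_hi /esp_lo /hiS /loS setTD. Qed.

Lemma KS_ge0 (S A : {set V}) : 0 <= espK e S A.
Proof. exact: Rmax_l. Qed.

Lemma KS_sum1 (S : {set V}) : \big[Rplus/0]_(A : {set V}) espK e S A = 1.
Proof.
rewrite -(KU_sum1 (@pS_ge0 S) (@pS_le1 S) setT).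
rewrite [RHS](eq_bigl (fun A => true)); last by move=> A; rewrite subsetT.
by apply: eq_bigr => A _; rewrite espK_KU Rmult_1_r.
Qed.

Lemma KS_mem (S : {set V}) (y : V) :
  \big[Rplus/0]_(A : {set V}) (espK e S A * ind A y) = pS S y.
Proof.
rewrite -(KU_summem (@pS_ge0 S) (@pS_le1 S) (in_setT y)).
rewrite [RHS](eq_bigl (fun A => true)); last by move=> A; rewrite subsetT.
by apply: eq_bigr => A _; rewrite espK_KU.
Qed.

Lemma KS_lin (S : {set V}) (c : V -> R) :
  \big[Rplus/0]_(A : {set V}) (espK e S A * \big[Rplus/0]_(y : V) (c y * ind A y)) =
  \big[Rplus/0]_(y : V) (c y * pS S y).
Proof.
rewrite (eq_bigr (fun A => \big[Rplus/0]_(y : V) (espK e S A * (c y * ind A y)))); last by move=> A _; rewrite rsum_mullT.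
rewrite exchange_bigT /=; apply: eq_bigr => y _.
rewrite -KS_mem rsum_mullT; apply: eq_bigr => A _; ring.
Qed.

Lemma dg_lazy_sum (z : V) :
  \big[Rplus/0]_(y : V) (dg y * lazyP e y z) = dg z.
Proof.
have -> : \big[Rplus/0]_(y : V) (dg y * lazyP e y z) =
          \big[Rplus/0]_(y : V) ((if z == y then dg z / 2 else 0) + (if e z y then / 2 else 0)).
  apply: eq_bigr => y _; rewrite lazyP_split.
  case: (eqVneq z y) => [->|zy]; first by rewrite ?eqxx e_irr; field.
  rewrite (e_sym z y).
  case: (e y z); last ring.
  have := dg_pos y => h; field; lra.
rewrite big_split /= sum_eq1 sum_if_const /dg /deg; field.
Qed.

Lemma sum_pS (S : {set V}) :
  \big[Rplus/0]_(y : V) (dg y * pS S y) = vol e S.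
Proof.
under eq_bigr do rewrite pSE rsum_mull.
rewrite exchange_big /= volE; rewrite big_mkcond /=; apply: eq_bigr => z _.
rewrite dg_lazy_sum /ind; case: (z \in S); ring.
Qed.

Lemma KS_vol (S : {set V}) :
  \big[Rplus/0]_(A : {set V}) (espK e S A * vol e A) = vol e S.
Proof.
under eq_bigr do rewrite volE.
by rewrite KS_lin sum_pS.
Qed.


Lemma ind_setD (A S : {set V}) y : ind (A :\: S) y = ind A y * (1 - ind S y).
Proof. rewrite /ind !inE; case: (y \in A); case: (y \in S) => /=; ring. Qed.

Lemma bdry_sum (S : {set V}) : bdry e S / 2 =
  \big[Rplus/0]_(y : V) \big[Rplus/0]_(z : V)
     (if [&& z \in S, y \notin S & e z y] then / 2 else 0).
Proof.
rewrite /bdry -sum_ind_card /Rdiv rsum_mulrT.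
rewrite (eq_bigr (fun p : V * V => (fun (z y : V) =>
   (if [&& z \in S, y \notin S & e z y] then 1 else 0) * / 2) p.1 p.2)); last first.
  by move=> [z y] _; rewrite inE.
rewrite -(pair_bigA _ (fun (z y : V) => (if [&& z \in S, y \notin S & e z y] then 1 else 0) * / 2)) /=.
rewrite exchange_bigT; apply: eq_bigr => y _; apply: eq_bigr => z _.
case: ifP => _; ring.
Qed.

Lemma KS_out (S : {set V}) :
  \big[Rplus/0]_(A : {set V}) (espK e S A * vol e (A :\: S)) = bdry e S / 2.
Proof.
rewrite (eq_bigr (fun A => espK e S A *
   \big[Rplus/0]_(y : V) ((dg y * (1 - ind S y)) * ind A y))); last first.
  move=> A _; rewrite volE; congr (_ * _); apply: eq_bigr => y _.
  rewrite ind_setD; ring.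
rewrite KS_lin bdry_sum; apply: eq_bigr => y _.
rewrite pSE big_mkcond rsum_mullT /=; apply: eq_bigr => z _.
rewrite /ind; case zS: (z \in S) => /=; last by case: (y \in S); ring.
case yS: (y \in S) => /=; first ring.
have zy : y != z by apply/eqP => yz; move: yS; rewrite yz zS.
rewrite /lazyP (negbTE zy) (e_sym z y).
case: (e y z); last ring.
have := dg_pos y; rewrite /dg => h; field; lra.
Qed.

Lemma KS_nested (S A : {set V}) : 0 < espK e S A -> (S \subset A) \/ (A \subset S).
Proof.
move=> hK.
case: (boolP (S \subset A)) => [SA|nSA]; first by left.
case: (boolP (A \subset S)) => [AS|nAS]; first by right.
exfalso.
case/subsetPn: nSA => a aS aA.
case/subsetPn: nAS => b bA bS.
move: hK; rewrite espK_KU /KU.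
have h1 : hiS (pS S) A <= pS S b by apply: hiS_le.
have h2 : pS S a <= loS (pS S) setT A by apply: loS_ge; rewrite !inE aA.
have h3 := pS_in aS.
have h4 := pS_out bS.
rewrite Rmax_left; lra.
Qed.

Lemma ind_symdiff (A S : {set V}) y :
  ind (symdiff A S) y = 2 * ind (A :\: S) y - (ind A y - ind S y).
Proof.
rewrite /symdiff /ind !inE; case: (y \in A); case: (y \in S) => /=; ring.
Qed.

Lemma vol_symdiff (A S : {set V}) :
  vol e (symdiff A S) = 2 * vol e (A :\: S) - (vol e A - vol e S).
Proof.
transitivity (\big[Rplus/0]_(y : V) (2 * (dg y * ind (A :\: S) y) + (-1) * (dg y * ind A y)
   + 1 * (dg y * ind S y))).
  rewrite volE; apply: eq_bigr => y _; rewrite ind_symdiff; ring.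
rewrite rsum_comb -!volE; ring.
Qed.

Lemma vol_symdiff_nested (A S : {set V}) :
  (S \subset A) \/ (A \subset S) -> vol e (symdiff A S) = Rabs (vol e A - vol e S).
Proof.
have key : forall B C : {set V}, C \subset B ->
   vol e (symdiff B C) = vol e B - vol e C /\ 0 <= vol e B - vol e C.
  move=> B C /subsetP CB.
  have E : vol e (symdiff B C) = vol e B - vol e C.
    transitivity (\big[Rplus/0]_(y : V) (1 * (dg y * ind B y) + (-1) * (dg y * ind C y)
       + 0 * (dg y * ind C y))); last by rewrite rsum_comb -!volE; ring.
    rewrite volE; apply: eq_bigr => y _.
    rewrite /symdiff /ind !inE.
    case yC: (y \in C); first by rewrite (CB _ yC) /=; ring.
    case: (y \in B) => /=; ring.
  split => //; rewrite -E; exact: vol_ge0.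
case=> [SA|AS].
  have [E P] := key A S SA; rewrite E Rabs_pos_eq //.
have [E P] := key S A AS.
have -> : symdiff A S = symdiff S A by rewrite /symdiff setUC.
rewrite E -Rabs_Ropp Rabs_pos_eq; lra.
Qed.


Lemma KS_symd (S : {set V}) :
  \big[Rplus/0]_(A : {set V}) (espK e S A * vol e (symdiff A S)) = bdry e S.
Proof.
transitivity (\big[Rplus/0]_(A : {set V}) (2 * (espK e S A * vol e (A :\: S))
   + (-1) * (espK e S A * vol e A) + vol e S * espK e S A)).
  apply: eq_bigr => A _; rewrite vol_symdiff; ring.
rewrite rsum_comb KS_out KS_vol KS_sum1; field.
Qed.

Lemma KS_abs (S : {set V}) : 0 < vol e S ->
  \big[Rplus/0]_(A : {set V}) (espK e S A * Rabs (vol e A / vol e S - 1)) = bdry e S / vol e S.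
Proof.
move=> vS.
transitivity (\big[Rplus/0]_(A : {set V}) (espK e S A * vol e (symdiff A S)) * / vol e S);
  last by rewrite KS_symd.
rewrite rsum_mulrT; apply: eq_bigr => A _.
case: (Rle_lt_or_eq_dec _ _ (KS_ge0 S A)) => [Kp|<-]; last ring.
rewrite (vol_symdiff_nested (KS_nested Kp)).
have -> : vol e A / vol e S - 1 = (vol e A - vol e S) * / vol e S by field; lra.
rewrite Rabs_mult (Rabs_pos_eq (/ vol e S)); first ring.
apply: Rlt_le; exact: Rinv_0_lt_compat.
Qed.

Lemma KS_X (S : {set V}) : 0 < vol e S ->
  \big[Rplus/0]_(A : {set V}) (espK e S A * (vol e A / vol e S)) = 1.
Proof.
move=> vS.
transitivity (\big[Rplus/0]_(A : {set V}) (espK e S A * vol e A) * / vol e S).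
  rewrite rsum_mulrT; apply: eq_bigr => A _; rewrite /Rdiv; ring.
rewrite KS_vol; field; lra.
Qed.

Definition Qf (S : {set V}) (a t l : R) (A : {set V}) : R :=
  let X := vol e A / vol e S in
  (a + (vol e (symdiff A S) + bdry e S)) / vol e S
  + l * X * (ln (vol e [set: V]) - ln (vol e S)) - l * (X * ln X) + 4 * t * X / l.

Lemma KS_step (S : {set V}) (a t l : R) : 0 < vol e S -> 0 < l ->
  \big[Rplus/0]_(A : {set V}) (espK e S A * Qf S a t l A) <=
  a / vol e S + l * (ln (vol e [set: V]) - ln (vol e S)) + 4 * (t + 1) / l.
Proof.
move=> vS lp.
set L := ln (vol e [set: V]) - ln (vol e S).
set al := a / vol e S + bdry e S / vol e S + l + 2 / l.
set be := l * L + 4 * t / l - l + 2 / l.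
apply: Rle_trans (_ : \big[Rplus/0]_(A : {set V})
   (al * espK e S A + be * (espK e S A * (vol e A / vol e S))
    + (/ vol e S) * (espK e S A * vol e (symdiff A S))
    + (-2) * (espK e S A * Rabs (vol e A / vol e S - 1))) <= _).
  apply: rsum_le => A _.
  have X0 : 0 <= vol e A / vol e S.
    apply: Rmult_le_pos; [exact: vol_ge0|apply: Rlt_le; exact: Rinv_0_lt_compat].
  have hk := key_ineq _ _ X0 lp.
  have K0 := KS_ge0 S A.
  have -> : al * espK e S A + be * (espK e S A * (vol e A / vol e S)) +
     / vol e S * (espK e S A * vol e (symdiff A S)) +
     -2 * (espK e S A * Rabs (vol e A / vol e S - 1)) =
     espK e S A * (al + be * (vol e A / vol e S) + / vol e S * vol e (symdiff A S)
        - 2 * Rabs (vol e A / vol e S - 1)) by ring.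
  apply: Rmult_le_compat_l => //.
  rewrite /Qf -/L /al /be.
  move: (vol e A / vol e S) X0 hk => X X0 hk.
  have -> : l * X * L = (l * L) * X by ring.
  have E1 : (a + (vol e (symdiff A S) + bdry e S)) / vol e S =
            a / vol e S + bdry e S / vol e S + / vol e S * vol e (symdiff A S).
    field; lra.
  have E2 : 4 * t * X / l = 4 * t / l * X by field; lra.
  have E3 : 2 * (1 + X) / l = 2 / l + 2 / l * X by field; lra.
  rewrite E1 E2; rewrite E3 in hk.
  move: (2 / l) (4 * t / l) (ln X) (l * L) hk => c d lnX lL hk.
  lra.
rewrite rsum_comb4 KS_sum1 KS_X // KS_symd KS_abs // /al /be.
apply: Req_le; field; lra.
Qed.

Lemma expectE (T : nat) (S0 : {set V}) (f : T.-tuple {set V} -> R) :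
  expect e S0 f = \big[Rplus/0]_(w : T.-tuple {set V}) (path_weight e T S0 w * f w).
Proof. by rewrite /expect rsumE big_enum. Qed.

Lemma state_cons (S0 x : {set V}) (w : seq {set V}) j : leq j (size w) ->
  state S0 (x :: w) j.+1 = state x w j.
Proof. by move=> hj; rewrite /state /=; apply: set_nth_default. Qed.

Lemma path_weight_cons (T : nat) (S0 x : {set V}) (w : seq {set V}) : size w = T ->
  path_weight e T.+1 S0 (x :: w) = espKhat e S0 x * path_weight e T x w.
Proof.
move=> sw; rewrite /path_weight /=; congr (_ * _).
rewrite (_ : iota 1 T = map (addn 1) (iota 0 T)); last by rewrite -iotaDl.
rewrite -map_comp; congr foldr; apply/eq_in_map => j.
rewrite mem_iota add0n => /andP [_ jT] /=.
rewrite add1n !state_cons //; rewrite sw //; exact: ltnW.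
Qed.

Lemma expect_step (T : nat) (S0 : {set V}) (f : T.+1.-tuple {set V} -> R) :
  expect e S0 f = \big[Rplus/0]_(x : {set V})
     (espKhat e S0 x * expect e x (fun w : T.-tuple {set V} => f [tuple of x :: w])).
Proof.
rewrite expectE.
pose h := fun p : {set V} * T.-tuple {set V} => [tuple of p.1 :: p.2].
have hb : {on [pred i | true], bijective h}.
  apply: onW_bij; exists (fun t : T.+1.-tuple {set V} => (thead t, [tuple of behead t])).
    move=> [x w]; rewrite /h /= theadE; congr pair; apply: val_inj => //.
  move=> t; rewrite /h /=; exact: esym (tuple_eta t).
rewrite (reindex h) /=; last exact: hb.
rewrite -(pair_bigA _ (fun (x : {set V}) (w : T.-tuple {set V}) =>
   path_weight e T.+1 S0 [tuple of x :: w] * f [tuple of x :: w])) /=.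
apply: eq_bigr => x _; rewrite expectE rsum_mullT; apply: eq_bigr => w _.
rewrite path_weight_cons ?size_tuple //; ring.
Qed.


Definition Cst (S0 : {set V}) (w : seq {set V}) (t : nat) : R :=
  rsum (iota 1 t) (fun j => vol e (symdiff (state S0 w j) (state S0 w j.-1))
                            + bdry e (state S0 w j.-1)).

Lemma rsum_iota_shift (g : nat -> R) m n :
  rsum (iota m.+1 n) g = rsum (iota m n) (fun j => g j.+1).
Proof. by elim: n m => [|n IH] m //=; rewrite IH. Qed.

Lemma rsum_eq_in (s : seq nat) (f g : nat -> R) :
  (forall j, j \in s -> f j = g j) -> rsum s f = rsum s g.
Proof.
elim: s => [|a s IH] //= H; rewrite H ?inE ?eqxx // IH // => j js.
by apply: H; rewrite inE js orbT.
Qed.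

Lemma Cst_cons (S0 x : {set V}) (w : seq {set V}) t : leq t (size w) ->
  Cst S0 (x :: w) t.+1 = (vol e (symdiff x S0) + bdry e S0) + Cst x w t.
Proof.
move=> ht; rewrite /Cst /=; congr (_ + _).
rewrite rsum_iota_shift; apply: rsum_eq_in => j; rewrite mem_iota => /andP [j1 jt].
have jw : leq j (size w).
  rewrite add1n ltnS in jt; exact: leq_trans jt ht.
have jw' : leq j.-1 (size w) by apply: leq_trans (leq_pred j) jw.
have E : state S0 (x :: w) j = state x w j.-1.
  by rewrite -{1}(prednK j1) state_cons.
by rewrite /= state_cons // E.
Qed.

Lemma state_agree (S0 x : {set V}) (w w' : seq {set V}) k :
  size w = size w' -> state x w k = state x w' k ->
  state S0 (x :: w) k.+1 = state S0 (x :: w') k.+1.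
Proof.
rewrite /state /= => sw H.
case: (ltnP k (size (x :: w))) => hk.
  rewrite (set_nth_default x) // (set_nth_default x) //; last by rewrite /= -sw.
rewrite !nth_default //; by rewrite /= -sw.
Qed.

Lemma stop_all0 (T : nat) (S0 : {set V}) (tau : T.-tuple {set V} -> nat) w0 :
  is_stopping_time S0 tau -> tau w0 = O -> forall w, tau w = O.
Proof.
move=> H h0 w; apply/(H w0 w O) => // j; rewrite leqn0 => /eqP -> //.
Qed.

Lemma stop_shift (T : nat) (S0 x : {set V}) (tau : T.+1.-tuple {set V} -> nat) :
  is_stopping_time S0 tau -> (forall w, tau w <> O) ->
  is_stopping_time x (fun w : T.-tuple {set V} => (tau [tuple of x :: w]).-1).
Proof.
move=> H nz w w' t Hag.
have E : forall u : T.-tuple {set V}, ((tau [tuple of x :: u]).-1 = t <-> tau [tuple of x :: u] = t.+1).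
  move=> u; have := nz [tuple of x :: u]; case: (tau _) => [//|n] _ /=; split; [by move->|by case].
rewrite !E; apply: H => j.
case: j => [|k] hk; first by [].
apply: state_agree; first by rewrite !size_tuple.
exact: Hag.
Qed.

Lemma Khat_eq (S0 x : {set V}) : espKhat e S0 x = espK e S0 x * (vol e x / vol e S0).
Proof. rewrite /espKhat; ring. Qed.

Lemma expect_ext (T : nat) (S0 : {set V}) (f g : T.-tuple {set V} -> R) :
  (forall w, f w = g w) -> expect e S0 f = expect e S0 g.
Proof. by move=> H; rewrite !expectE; apply: eq_bigr => w _; rewrite H. Qed.

Lemma total_weight (T : nat) : forall S0 : {set V}, 0 < vol e S0 ->
  expect e S0 (fun _ : T.-tuple {set V} => 1) = 1.
Proof.
elim: T => [|T IH] S0 vS.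
  rewrite expectE (eq_bigl (pred1 [tuple])); last by move=> w; symmetry; apply/eqP; exact: tuple0.
  rewrite big_pred1_eq /path_weight /=; ring.
rewrite expect_step.
transitivity (\big[Rplus/0]_(x : {set V}) (espK e S0 x * (vol e x / vol e S0))); last exact: KS_X.
apply: eq_bigr => x _; rewrite Khat_eq.
case: (Rle_lt_or_eq_dec _ _ (vol_ge0 x)) => [vx|<-].
  by rewrite IH //; ring.
rewrite /Rdiv; ring.
Qed.


Lemma expect_const (T : nat) (S0 : {set V}) (f : T.-tuple {set V} -> R) c :
  (forall w, f w = c) -> expect e S0 f = c * expect e S0 (fun _ : T.-tuple {set V} => 1).
Proof.
move=> H; rewrite !expectE rsum_mullT; apply: eq_bigr => w _; rewrite H; ring.
Qed.

Lemma tau0_case (T : nat) (S0 : {set V}) (tau : T.-tuple {set V} -> nat) a :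
  0 < vol e S0 -> (forall w, tau w = O) ->
  expect e S0 (fun w => (a + Cst S0 w (tau w)) / vol e (state S0 w (tau w))) = a / vol e S0.
Proof.
move=> vS H; rewrite (@expect_const T S0 _ (a / vol e S0)) ?total_weight //; first ring.
by move=> w; rewrite H /Cst /= Rplus_0_r.
Qed.

Lemma bdry_ge0 (S : {set V}) : 0 <= bdry e S.
Proof. exact: pos_INR. Qed.

Lemma L_ge0 (S : {set V}) : 0 < vol e S -> 0 <= ln (vol e [set: V]) - ln (vol e S).
Proof. move=> vS; have := ln_le_mono _ _ vS (vol_le_setT S); lra. Qed.

Lemma main_ind l (lp : 0 < l) (T : nat) : forall (S0 : {set V}) (tau : T.-tuple {set V} -> nat) a,
  0 < vol e S0 -> (forall w, leq (tau w) T) -> is_stopping_time S0 tau -> 0 <= a ->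
  expect e S0 (fun w => (a + Cst S0 w (tau w)) / vol e (state S0 w (tau w)))
   <= a / vol e S0 + l * (ln (vol e [set: V]) - ln (vol e S0)) + 4 * INR T / l.
Proof.
elim: T => [|T IH] S0 tau a vS tle tst a0.
  have H0 : forall w, tau w = O by move=> w; apply/eqP; rewrite -leqn0; exact: tle.
  rewrite tau0_case //.
  have := L_ge0 vS => hL.
  have : 0 <= l * (ln (vol e [set: V]) - ln (vol e S0)) by apply: Rmult_le_pos; lra.
  have -> : 4 * INR 0 / l = 0 by rewrite /=; field; lra.
  lra.
have Tpos : 0 <= 4 * INR T.+1 / l.
  apply: Rmult_le_pos; last by apply: Rlt_le; apply: Rinv_0_lt_compat.
  have := pos_INR T.+1; lra.
pose w0 := [tuple of nseq T.+1 S0].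
case: (eqVneq (tau w0) O) => [h0|hn0].
  rewrite tau0_case //; last exact: stop_all0 tst h0.
  have := L_ge0 vS => hL.
  have : 0 <= l * (ln (vol e [set: V]) - ln (vol e S0)) by apply: Rmult_le_pos; lra.
  lra.
have nz : forall w, tau w <> O.
  by move=> w hw; move/eqP: hn0; apply; apply: (stop_all0 tst hw).
rewrite expect_step.
apply: Rle_trans (_ : \big[Rplus/0]_(x : {set V}) (espK e S0 x * Qf S0 a (INR T) l x) <= _);
  last first.
  by rewrite S_INR; apply: KS_step.
apply: rsum_le => x _.
rewrite Khat_eq.
have K0 := KS_ge0 S0 x.
case: (Rle_lt_or_eq_dec _ _ (vol_ge0 x)) => [vx|v0]; last first.
  rewrite -v0 /Rdiv !Rmult_0_l Rmult_0_r Rmult_0_l.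
  apply: Rmult_le_pos => //.
  rewrite /Qf -v0 /Rdiv !Rmult_0_l !Rmult_0_r.
  have : 0 <= (a + (vol e (symdiff x S0) + bdry e S0)) * / vol e S0.
    apply: Rmult_le_pos; last by apply: Rlt_le; apply: Rinv_0_lt_compat.
    have := vol_ge0 (symdiff x S0); have := bdry_ge0 S0; lra.
  lra.
pose tau' := fun w : T.-tuple {set V} => (tau [tuple of x :: w]).-1.
set a' := a + (vol e (symdiff x S0) + bdry e S0).
have tle' : forall w, leq (tau' w) T.
  move=> w; rewrite /tau' -ltnS prednK; first exact: tle.
  by rewrite lt0n; apply/eqP; exact: nz.
have Eexp : expect e x (fun w : T.-tuple {set V} =>
      (a + Cst S0 [tuple of x :: w] (tau [tuple of x :: w])) /
      vol e (state S0 [tuple of x :: w] (tau [tuple of x :: w]))) =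
    expect e x (fun w => (a' + Cst x w (tau' w)) / vol e (state x w (tau' w))).
  apply: expect_ext => w.
  have hp : tau [tuple of x :: w] = (tau' w).+1.
    by rewrite /tau' prednK // lt0n; apply/eqP; exact: nz.
  have hs : leq (tau' w) (size w) by rewrite size_tuple.
  rewrite hp /= Cst_cons // state_cons // /a'; congr (_ / _); ring.
rewrite Eexp.
have a'0 : 0 <= a'.
  rewrite /a'; have := vol_ge0 (symdiff x S0); have := bdry_ge0 S0; lra.
have IHx := IH x tau' a' vx tle' (stop_shift tst nz) a'0.
have X0 : 0 <= espK e S0 x * (vol e x / vol e S0).
  apply: Rmult_le_pos => //; apply: Rmult_le_pos; first exact: vol_ge0.
  by apply: Rlt_le; apply: Rinv_0_lt_compat.
apply: Rle_trans (Rmult_le_compat_l _ _ _ X0 IHx) _.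
apply: Req_le.
have lnX : ln (vol e x) = ln (vol e S0) + ln (vol e x / vol e S0).
  rewrite -ln_mult //; last by apply: Rdiv_lt_0_compat.
  congr ln; field; lra.
rewrite /Qf -/a' lnX; field; lra.
Qed.


Lemma dg_ge1 (x : V) : 1 <= dg x.
Proof. rewrite /dg; apply: (le_INR 1); apply/leP; exact: deg_pos. Qed.

Lemma vol_setT_gt1 (x : V) : 1 < vol e [set: V].
Proof.
have : leq 1 #|[set y | e x y]| by exact: deg_pos.
rewrite card_gt0 => /set0Pn [y]; rewrite inE => exy.
have yx : y != x by apply: contraTneq exy => ->; rewrite e_irr.
rewrite volE (bigD1 x) //= (bigD1 y) //=.
have : 0 <= \big[Rplus/0]_(i | (i != x) && (i != y)) (dg i * ind [set: V] i).
  apply: rsum_ge0 => i _; rewrite /ind inE; have := dg_pos i; lra.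
rewrite /ind !inE; have := dg_ge1 x; have := dg_ge1 y; lra.
Qed.

Lemma vol_ge1 (S : {set V}) : 0 < vol e S -> 1 <= vol e S.
Proof.
rewrite /vol => h; apply: (le_INR 1); apply/leP.
case: (posnP (\sum_(x in S) deg e x)) => [E|//]; move: h; rewrite E /=; lra.
Qed.

End Graph.

Close Scope R_scope.
Unset Implicit Arguments.

Theorem theorem5 (V : finType) (e : rel V)
  (e_sym : symmetric e) (e_irr : irreflexive e)
  (deg_pos : forall x : V, (0 < deg e x)%N)
  (S0 : {set V}) (hS0 : S0 != set0) (T : nat)
  (tau : T.-tuple {set V} -> nat)
  (tau_le : forall w, (tau w <= T)%N)
  (tau_stop : is_stopping_time S0 tau) :
  (expect e S0
     (fun w => cost e S0 w (tau w) / vol e (state S0 w (tau w)))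
   <= 1 + 4 * sqrt (INR T * ln (vol e [set: V])))%R.
Proof.
have vS := vol_pos deg_pos hS0.
have -> : expect e S0 (fun w => (cost e S0 w (tau w) / vol e (state S0 w (tau w)))%R) =
          expect e S0 (fun w => ((vol e S0 + Cst e S0 w (tau w)) / vol e (state S0 w (tau w)))%R).
  by apply: expect_ext.
case: T tau tau_le tau_stop => [|T] tau tau_le tau_stop.
  have H0 : forall w, tau w = O by move=> w; apply/eqP; rewrite -leqn0; exact: tau_le.
  rewrite (tau0_case e_sym e_irr deg_pos) //.
  rewrite Rmult_0_l sqrt_0 Rmult_0_r Rplus_0_r.
  apply: Req_le; field; lra.
case/set0Pn: hS0 => x0 _.
have v1 := vol_setT_gt1 e_irr deg_pos x0.
set vV := vol e [set: V] in v1 *.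
have lp : (0 < ln vV)%R by rewrite -ln_1; apply: ln_increasing; lra.
have Tp : (0 < INR T.+1)%R by apply: lt_0_INR; apply/ltP.
set q := sqrt (INR T.+1 * ln vV).
have qp : (0 < q)%R by apply: sqrt_lt_R0; apply: Rmult_lt_0_compat.
have qq : (q * q = INR T.+1 * ln vV)%R by apply: sqrt_sqrt; nra.
have llp : (0 < 2 * q / ln vV)%R by apply: Rdiv_lt_0_compat; lra.
have M := main_ind e_sym e_irr deg_pos llp vS tau_le tau_stop (Rlt_le _ _ vS).
have lS : (0 <= ln (vol e S0))%R.
  rewrite -ln_1; apply: ln_le_mono; [lra|exact: (vol_ge1 vS)].
apply: Rle_trans M _.
have E1 : (vol e S0 / vol e S0 = 1)%R by field; lra.
rewrite E1 -/vV.
have E2 : (4 * INR T.+1 / (2 * q / ln vV) = 2 * q)%R.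
  have -> : INR T.+1 = (q * q / ln vV)%R by rewrite qq; field; lra.
  field; lra.
rewrite E2.
have : (2 * q / ln vV * ln (vol e S0) >= 0)%R.
  apply: Rle_ge; apply: Rmult_le_pos => //; lra.
have E3 : (2 * q / ln vV * (ln vV - ln (vol e S0)) = 2 * q - 2 * q / ln vV * ln (vol e S0))%R.
  field; lra.
rewrite E3; lra.
Qed.
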